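(* The only (one-sided) infinite binary words that contain no $3$-antipower as a factor are the words $0^\omega$, $(01)^\omega$, $110^\omega$, $1010^\omega$, $0^i10^\omega$ for $i \geq 0$, and their bitwise complements.
   Context: A $3$-antipower is a finite word $u_1u_2u_3$ with $|u_1|=|u_2|=|u_3|$ and $u_1,u_2,u_3$ pairwise distinct; a factor is a contiguous subword. For a finite word $x$, $x^\omega$ is the one-sided infinite word $xxx\cdots$. The bitwise complement exchanges $0$ and $1$. *)

(* Defs.v *)
(* Binary letters are booleans: 0 = false, 1 = true. *)
From mathcomp Require Import all_boot.
Set Implicit Arguments. Unset Strict Implicit. Unset Printing Implicit Defensive.

Definition infword := nat -> bool.

Definition is_3antipower (s : seq bool) : Prop :=
  exists u1 u2 u3 : seq bool,
    [/\ s = u1 ++ u2 ++ u3, size u1 = size u2, size u2 = size u3 &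
        [/\ u1 != u2, u1 != u3 & u2 != u3]].

Definition factor (w : infword) (i n : nat) : seq bool :=
  mkseq (fun k => w (i + k)) n.

Definition contains_3antipower (w : infword) : Prop :=
  exists i n, is_3antipower (factor w i n).

(* x^omega = x x x ... (meaningful for nonempty x). *)
Definition omega (x : seq bool) : infword :=
  fun k => nth false x (k %% size x).

Definition prepend (u : seq bool) (w : infword) : infword :=
  fun k => if k < size u then nth false u k else w (k - size u).

Definition compl (w : infword) : infword := fun k => ~~ w k.

Definition listed_word (w : infword) : Prop :=
  w =1 omega [:: false] \/
  w =1 omega [:: false; true] \/
  w =1 prepend [:: true; true] (omega [:: false]) \/
  w =1 prepend [:: true; false; true] (omega [:: false]) \/
  exists i : nat, w =1 prepend (nseq i false ++ [:: true]) (omega [:: false]).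

(* Main.v *)
Require Import Defs.
From mathcomp Require Import all_boot.
From mathcomp Require Import zify.
From Stdlib Require Import Classical.
Set Implicit Arguments. Unset Strict Implicit. Unset Printing Implicit Defensive.

Lemma size_factor w q m : size (factor w q m) = m.
Proof. by rewrite /factor size_mkseq. Qed.

Lemma nth_factor w q m j : j < m -> nth false (factor w q m) j = w (q + j).
Proof. by move=> H; rewrite /factor nth_mkseq. Qed.

Lemma factor_add w i m n : factor w i (m + n) = factor w i m ++ factor w (i + m) n.
Proof.
apply: (@eq_from_nth _ false); first by rewrite size_cat !size_factor.
move=> j; rewrite size_factor => Hj.
rewrite nth_cat size_factor nth_factor //.
case: ltnP => H; first by rewrite nth_factor.
rewrite nth_factor; last by lia.
by rewrite -addnA subnKC.
Qed.

Lemma factor_ext w w' i n : w =1 w' -> factor w i n = factor w' i n.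
Proof. by move=> H; apply: eq_mkseq => k; rewrite H. Qed.

Definition anti3 (w : infword) i m :=
  [&& factor w i m != factor w (i + m) m,
      factor w i m != factor w (i + m + m) m &
      factor w (i + m) m != factor w (i + m + m) m].

Lemma containsP w : contains_3antipower w <-> exists i m, anti3 w i m.
Proof.
split.
- move=> [i [n [u1 [u2 [u3 [Hs H12 H23 [D12 D13 D23]]]]]]].
  have Hn : n = size u1 + (size u1 + size u1).
    by rewrite -(size_factor w i n) Hs !size_cat -H23 -H12.
  exists i, (size u1).
  move: Hs; rewrite Hn !factor_add => /eqP.
  rewrite eq_sym eqseq_cat ?size_factor // => /andP [/eqP E1].
  rewrite eqseq_cat ?size_factor // => /andP [/eqP E2 /eqP E3].
  by rewrite /anti3 -E1 -E2 -E3 D12 D13 D23.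
- move=> [i [m /and3P [D12 D13 D23]]].
  exists i, (m + (m + m)), (factor w i m), (factor w (i + m) m), (factor w (i + m + m) m).
  by split; rewrite ?size_factor // !factor_add.
Qed.

Lemma blocks_diff w q1 q2 m j : j < m -> w (q1 + j) != w (q2 + j) ->
  factor w q1 m != factor w q2 m.
Proof.
move=> Hj; apply: contra => /eqP E.
by rewrite -(nth_factor w q1 Hj) -(nth_factor w q2 Hj) E.
Qed.

Lemma contains_ext w w' : w =1 w' -> contains_3antipower w -> contains_3antipower w'.
Proof.
move=> H /containsP [i [m A]]; apply/containsP; exists i, m.
by move: A; rewrite /anti3 !(factor_ext _ _ H).
Qed.

Lemma factor_compl w q m : factor (compl w) q m = map negb (factor w q m).
Proof. by rewrite /factor /mkseq -map_comp. Qed.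

Lemma contains_compl w : contains_3antipower (compl w) -> contains_3antipower w.
Proof.
move=> /containsP [i [m A]]; apply/containsP; exists i, m.
move: A; rewrite /anti3 !factor_compl !(inj_eq (inj_map negb_inj)).
by [].
Qed.

Lemma contains_compl' w : contains_3antipower w -> contains_3antipower (compl w).
Proof.
move=> H; apply: contains_compl; apply: contains_ext H => k.
by rewrite /compl negbK.
Qed.

Definition blk (s : seq bool) q m := take m (drop q s).
Definition anti_at (s : seq bool) i m :=
  [&& i + m + m + m <= size s, blk s i m != blk s (i + m) m,
      blk s i m != blk s (i + m + m) m & blk s (i + m) m != blk s (i + m + m) m].
Definition has_anti (s : seq bool) :=
  has (fun i => has (fun m => anti_at s i m) (iota 0 (size s).+1)) (iota 0 (size s).+1).

Lemma blk_factor w p n q m : q + m <= n -> blk (factor w p n) q m = factor w (p + q) m.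
Proof.
move=> H; apply: (@eq_from_nth _ false).
  by rewrite /blk size_takel ?size_factor // size_drop size_factor; lia.
move=> j; rewrite /blk size_takel; last by rewrite size_drop size_factor; lia.
move=> Hj.
have Hjm : j < m by lia.
rewrite nth_take // nth_drop nth_factor; last by lia.
by rewrite nth_factor // addnA.
Qed.

Lemma has_anti_contains w p n : has_anti (factor w p n) -> contains_3antipower w.
Proof.
move=> /hasP [i _ /hasP [m _ /and4P [Hs D1 D2 D3]]].
rewrite size_factor in Hs.
apply/containsP; exists (p + i), m.
move: D1 D2 D3; rewrite !blk_factor; try lia.
by rewrite /anti3 !addnA => -> -> ->.
Qed.

Lemma anti3_by (w : infword) i m j1 j2 j3 :
  j1 < m -> w (i + j1) != w (i + m + j1) ->
  j2 < m -> w (i + j2) != w (i + m + m + j2) ->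
  j3 < m -> w (i + m + j3) != w (i + m + m + j3) -> contains_3antipower w.
Proof.
move=> h1 d1 h2 d2 h3 d3; apply/containsP; exists i, m.
apply/and3P; split; [exact: blocks_diff d1 | exact: blocks_diff d2 | exact: blocks_diff d3].
Qed.

Lemma neq_tf (w : infword) x y x' y' : x = x' -> y = y' ->
  w x' = true -> w y' = false -> w x != w y.
Proof. by move=> -> -> -> ->. Qed.
Lemma neq_ft (w : infword) x y x' y' : x = x' -> y = y' ->
  w x' = false -> w y' = true -> w x != w y.
Proof. by move=> -> -> -> ->. Qed.

Lemma T1 (w : infword) a d : 3 <= d -> w a = true -> w (a + d) = true ->
  (forall k, a < k < a + d -> w k = false) ->
  (forall k, a + d < k < a + d + d -> w k = false) -> contains_3antipower w.
Proof.
move=> Hd Ha Hb Z1 Z2.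
apply: (@anti3_by w a (d - 1) 0 0 1); try lia.
- apply: (neq_tf (x' := a) (y' := a + (d - 1))); rewrite ?addn0 //.
  by apply: Z1; lia.
- apply: (neq_tf (x' := a) (y' := a + (d - 1) + (d - 1))); rewrite ?addn0 //.
  by apply: Z2; lia.
- apply: (neq_tf (x' := a + d) (y' := a + (d - 1) + (d - 1) + 1)) => //; first lia.
  by apply: Z2; lia.
Qed.

Lemma TD (w : infword) a m D : m + m < D < m + m + m -> w a = true ->
  (forall k, a + m <= k < a + D -> w k = false) -> w (a + D) = true ->
  contains_3antipower w.
Proof.
move=> HD Ha Z Hc.
apply: (@anti3_by w a m 0 0 (D - m - m)); try lia.
- apply: (neq_tf (x' := a) (y' := a + m)); rewrite ?addn0 //.
  by apply: Z; lia.
- apply: (neq_tf (x' := a) (y' := a + m + m)); rewrite ?addn0 //.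
  by apply: Z; lia.
- apply: (neq_ft (x' := a + m + (D - m - m)) (y' := a + D)) => //; first lia.
  by apply: Z; lia.
Qed.

Lemma C2a (w : infword) a : w a = true -> w (a+1) = true -> w (a+2) = false ->
  w (a+3) = false -> w (a+4) = true -> contains_3antipower w.
Proof.
move=> h0 h1 h2 h3 h4.
apply: (@has_anti_contains w a 9).
rewrite /factor /mkseq /= addn0 h0 h1 h2 h3 h4.
case: (w (a+5)); case: (w (a+6)); case: (w (a+7)); case: (w (a+8)); by vm_compute.
Qed.

Lemma C2b (w : infword) a : w a = true -> w (a+1) = true -> w (a+2) = false ->
  w (a+3) = false -> w (a+4) = false -> w (a+5) = false -> w (a+6) = true ->
  contains_3antipower w.
Proof.
move=> h0 h1 h2 h3 h4 h5 h6.
apply: (@has_anti_contains w a 7).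
rewrite /factor /mkseq /= addn0 h0 h1 h2 h3 h4 h5 h6; by vm_compute.
Qed.

Lemma C2c (w : infword) a : w a = true -> w (a+1) = false -> w (a+2) = true ->
  w (a+3) = false -> w (a+4) = false -> w (a+5) = true -> contains_3antipower w.
Proof.
move=> h0 h1 h2 h3 h4 h5.
apply: (@has_anti_contains w a 7).
rewrite /factor /mkseq /= addn0 h0 h1 h2 h3 h4 h5.
case: (w (a+6)); by vm_compute.
Qed.

Lemma C2d (w : infword) a : w a = true -> w (a+1) = false -> w (a+2) = true ->
  w (a+3) = false -> w (a+4) = false -> w (a+5) = false -> w (a+6) = true ->
  contains_3antipower w.
Proof.
move=> h0 h1 h2 h3 h4 h5 h6.
apply: (@has_anti_contains w a 12).
rewrite /factor /mkseq /= addn0 h0 h1 h2 h3 h4 h5 h6.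
case: (w (a+7)); case: (w (a+8)); case: (w (a+9)); case: (w (a+10)); case: (w (a+11));
  by vm_compute.
Qed.

Lemma C3a (w : infword) p : w (p+1) = true -> w (p+2) = true ->
  w (p+3) = false -> w (p+4) = false -> w (p+5) = false -> contains_3antipower w.
Proof.
move=> h1 h2 h3 h4 h5.
apply: (@has_anti_contains w p 6).
rewrite /factor /mkseq /= addn0 h1 h2 h3 h4 h5.
case: (w p); by vm_compute.
Qed.

Lemma C3b (w : infword) p : w (p+1) = true -> w (p+2) = false -> w (p+3) = true ->
  w (p+4) = false -> w (p+5) = false -> w (p+6) = false -> w (p+7) = false ->
  w (p+8) = false -> contains_3antipower w.
Proof.
move=> h1 h2 h3 h4 h5 h6 h7 h8.
apply: (@has_anti_contains w p 9).
rewrite /factor /mkseq /= addn0 h1 h2 h3 h4 h5 h6 h7 h8.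
case: (w p); by vm_compute.
Qed.

Lemma C1 (w : infword) p : w (p+1) = w p -> w (p+2) = ~~ w p -> w (p+3) = w p ->
  w (p+4) = ~~ w p -> w (p+5) = w p -> w (p+6) = ~~ w p -> w (p+7) = w p ->
  w (p+8) = ~~ w p -> contains_3antipower w.
Proof.
move=> h1 h2 h3 h4 h5 h6 h7 h8.
apply: (@has_anti_contains w p 9).
rewrite /factor /mkseq /= addn0 h1 h2 h3 h4 h5 h6 h7 h8.
case: (w p); by vm_compute.
Qed.

Definition inf1 (w : infword) := forall N, exists k, N <= k /\ w k = true.

Lemma next_one (w : infword) b : inf1 w -> exists d, [/\ 0 < d, w (b + d) = true &
  forall k, b < k < b + d -> w k = false].
Proof.
move=> I; have [k [Hk Wk]] := I (b + 1).
have exP : exists j, (fun j => w (b + 1 + j)) j.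
  by exists (k - (b + 1)); rewrite subnKC.
case: (ex_minnP exP) => j /= Hj Hmin.
exists j.+1; split => //; first by rewrite (_ : b + j.+1 = b + 1 + j) //; lia.
move=> k' /andP [h1 h2]; apply/negbTE/negP => Wk'.
have := Hmin (k' - (b + 1)); rewrite subnKC; last by lia.
by move=> /(_ Wk'); lia.
Qed.

Lemma T2a (w : infword) a : inf1 w -> w a = true -> w (a+1) = true ->
  w (a+2) = false -> w (a+3) = false -> contains_3antipower w.
Proof.
move=> I h0 h1 h2 h3.
have [d [Hd Hc Z]] := next_one (a + 1) I.
have z k : a + 2 <= k < a + 1 + d -> w k = false by move=> H; apply: Z; lia.
have Hd3 : 3 <= d.
  case: d Hd Hc Z z => [|[|[|d]]] //; rewrite -addnA /= ?h2 ?h3 //.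
have [E3|N3] := eqVneq d 3.
  subst d; apply: C2a h0 h1 h2 h3 _; by rewrite -addnA in Hc.
have [E5|N5] := eqVneq d 5.
  subst d; apply: C2b h0 h1 h2 h3 (z _ _) (z _ _) _; try lia.
  by rewrite -addnA in Hc.
have [E4|N4] := eqVneq d 4.
  subst d; apply: (@TD w a 2 5) => //; last by rewrite -addnA in Hc.
  by move=> k Hk; apply: z; lia.
apply: (@TD w a ((d + 1 - 1) %/ 2) (d + 1)) => //; first lia.
  by move=> k Hk; apply: z; lia.
by rewrite (_ : a + (d + 1) = a + 1 + d) //; lia.
Qed.

Lemma T2b (w : infword) a : inf1 w -> w a = true -> w (a+1) = false -> w (a+2) = true ->
  w (a+3) = false -> w (a+4) = false -> contains_3antipower w.
Proof.
move=> I h0 h1 h2 h3 h4.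
have [d [Hd Hc Z]] := next_one (a + 2) I.
have z k : a + 3 <= k < a + 2 + d -> w k = false by move=> H; apply: Z; lia.
have Hd3 : 3 <= d.
  case: d Hd Hc Z z => [|[|[|d]]] //; rewrite -addnA /= ?h3 ?h4 //.
have [E3|N3] := eqVneq d 3.
  subst d; apply: C2c h0 h1 h2 h3 h4 _; by rewrite -addnA in Hc.
have [E4|N4] := eqVneq d 4.
  subst d; apply: C2d h0 h1 h2 h3 h4 (z _ _) _; try lia.
  by rewrite -addnA in Hc.
apply: (@TD w a ((d + 2 - 1) %/ 2) (d + 2)) => //; first lia.
  by move=> k Hk; apply: z; lia.
by rewrite (_ : a + (d + 2) = a + 2 + d) //; lia.
Qed.

Lemma good_exists (w : infword) : ~ contains_3antipower w -> inf1 w ->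
  exists a, w a = true /\ (w (a + 1) = true \/ w (a + 2) = true).
Proof.
move=> A I; apply: NNPP => Hno.
have H a : w a = true -> w (a + 1) = false /\ w (a + 2) = false.
  move=> Wa; split; apply/negbTE/negP => W; apply: Hno; exists a; tauto.
have [a0 [_ W0]] := I 0.
have [d0 [Hd0 Hc0 Z0]] := next_one a0 I.
suff S : forall d a, w a = true -> 0 < d -> w (a + d) = true ->
  (forall k, a < k < a + d -> w k = false) -> False by apply: (S d0 a0 W0 Hd0 Hc0 Z0).
elim/ltn_ind => d IH a Wa Hd Wb Z.
have [Ha1 Ha2] := H a Wa.
have Hd3 : 3 <= d.
  case: d IH Hd Wb Z => [|[|[|d]]] //; rewrite ?Ha1 ?Ha2 //.
have [d' [Hd' Wc Z']] := next_one (a + d) I.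
have [Hb1 Hb2] := H _ Wb.
have Hd'3 : 3 <= d'.
  case: d' Hd' Wc Z' => [|[|[|d']]] //; rewrite ?Hb1 ?Hb2 //.
case: (ltnP d' d) => Hlt.
  by apply: (IH d' Hlt (a + d)).
apply: A; apply: (T1 Hd3 Wa Wb Z) => k Hk; apply: Z'; lia.
Qed.

Lemma S1 (w : infword) : ~ contains_3antipower w -> inf1 w ->
  exists P, forall p, P <= p -> w p || w (p + 1).
Proof.
move=> A I.
have [a [Wa Hab]] := good_exists A I.
exists a => p Hp; apply: NNPP => Hn.
have exP : exists p, (fun p => [&& a <= p, ~~ w p & ~~ w (p + 1)]) p.
  exists p; apply/and3P; split => //; by case: (w p) (w (p+1)) Hn => [] [].
case: (ex_minnP exP) => q /and3P [Hq Wq Wq1] Hmin.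
have Wq' : w q = false by apply/negbTE.
have Wq1' : w (q + 1) = false by apply/negbTE.
have Hq2 : a + 2 <= q.
  have : q != a by apply: contraNneq Wq => ->.
  have : q != a + 1.
    apply/eqP => E; subst q.
    case: Hab => H; first by rewrite H in Wq.
    by rewrite -addnA /= H in Wq1'.
  lia.
have Wm1 : w (q - 1) = true.
  apply: NNPP => Hf.
  have := Hmin (q - 1); rewrite (_ : q - 1 + 1 = q); last lia.
  have -> : w (q - 1) = false by case: (w (q-1)) Hf.
  rewrite Wq' /=.
  rewrite andbT => H; have : a <= q - 1 by lia.
  by move=> /H; lia.
case Wm2: (w (q - 2)).
  apply: A; apply: (T2a (a := q - 2) I Wm2).
  - by rewrite (_ : q - 2 + 1 = q - 1) //; lia.
  - by rewrite (_ : q - 2 + 2 = q) //; lia.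
  - by rewrite (_ : q - 2 + 3 = q + 1) //; lia.
have Hq3 : a + 3 <= q.
  have : q - 2 != a by apply/eqP => E; rewrite E Wa in Wm2.
  lia.
have Wm3 : w (q - 3) = true.
  apply: NNPP => Hf.
  have := Hmin (q - 3); rewrite (_ : q - 3 + 1 = q - 2); last lia.
  have -> : w (q - 3) = false by case: (w (q-3)) Hf.
  rewrite Wm2 /=.
  rewrite andbT => H; have : a <= q - 3 by lia.
  by move=> /H; lia.
apply: A; apply: (T2b (a := q - 3) I Wm3).
- by rewrite (_ : q - 3 + 1 = q - 2) //; lia.
- by rewrite (_ : q - 3 + 2 = q - 1) //; lia.
- by rewrite (_ : q - 3 + 3 = q) //; lia.
- by rewrite (_ : q - 3 + 4 = q + 1) //; lia.
Qed.

Lemma alt_seq (w : infword) Q : (forall p, Q <= p -> w (p + 1) = ~~ w p) ->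
  forall k, w (Q + k) = if odd k then ~~ w Q else w Q.
Proof.
move=> H; elim=> [|k IH]; first by rewrite addn0.
rewrite addnS -addn1 H; last lia.
by rewrite IH /=; case: (odd k); rewrite ?negbK.
Qed.

Lemma alt_back (w : infword) P : ~ contains_3antipower w ->
  (forall p, P <= p -> w (p + 1) = ~~ w p) -> forall p, w (p + 1) = ~~ w p.
Proof.
move=> A; elim: P => [|P IH] H; first by move=> p; apply: H.
apply: IH => p Hp.
case: (ltnP P p) => Hlt; first by apply: H.
have -> : p = P by lia.
apply: NNPP => Hne; apply: A.
have E1 : w (P + 1) = w P by case: (w P) (w (P+1)) Hne => [] [].
have S := alt_seq H.
apply: (@C1 w P) => //.
- have := S 1; rewrite (_ : P.+1 + 1 = P + 2); last lia.
  by move=> ->; rewrite /= -addn1 E1.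
- have := S 2; rewrite (_ : P.+1 + 2 = P + 3); last lia.
  by move=> ->; rewrite /= -addn1 E1.
- have := S 3; rewrite (_ : P.+1 + 3 = P + 4); last lia.
  by move=> ->; rewrite /= -addn1 E1.
- have := S 4; rewrite (_ : P.+1 + 4 = P + 5); last lia.
  by move=> ->; rewrite /= -addn1 E1.
- have := S 5; rewrite (_ : P.+1 + 5 = P + 6); last lia.
  by move=> ->; rewrite /= -addn1 E1.
- have := S 6; rewrite (_ : P.+1 + 6 = P + 7); last lia.
  by move=> ->; rewrite /= -addn1 E1.
- have := S 7; rewrite (_ : P.+1 + 7 = P + 8); last lia.
  by move=> ->; rewrite /= -addn1 E1.
Qed.

Lemma inf1_compl_fin (w : infword) :
  ~ (exists N, forall k, N <= k -> w k = false) -> inf1 w.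
Proof.
move=> H N; apply: NNPP => Hn; apply: H; exists N => k Hk.
apply/negbTE/negP => W; apply: Hn; by exists k.
Qed.

Lemma caseII (w : infword) : ~ contains_3antipower w ->
  ~ (exists N, forall k, N <= k -> w k = false) ->
  ~ (exists N, forall k, N <= k -> compl w k = false) ->
  forall p, w (p + 1) = ~~ w p.
Proof.
move=> A H0 H1.
have [P1 HP1] := S1 A (inf1_compl_fin H0).
have A' : ~ contains_3antipower (compl w) by move=> /contains_compl.
have [P2 HP2] := S1 A' (inf1_compl_fin H1).
apply: (@alt_back w (P1 + P2)) => // p Hp.
have := HP1 p ltac:(lia); have := HP2 p ltac:(lia); rewrite /compl.
by case: (w p) (w (p+1)) => [] [].
Qed.

Lemma prepend110 k : prepend [:: true; true] (omega [:: false]) k = (k < 2).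
Proof. by case: k => [|[|k]] //; rewrite /prepend /omega /= modn1. Qed.

Lemma prepend1010 k : prepend [:: true; false; true] (omega [:: false]) k = (k == 0) || (k == 2).
Proof. by case: k => [|[|[|k]]] //; rewrite /prepend /omega /= modn1. Qed.

Lemma prependi i k : prepend (nseq i false ++ [:: true]) (omega [:: false]) k = (k == i).
Proof.
rewrite /prepend /omega size_cat size_nseq /= modn1 /= addn1 ltnS nth_cat size_nseq.
case: (ltngtP k i) => H.
- by rewrite nth_nseq H.
- by [].
- by rewrite H subnn.
Qed.

Lemma omega0 k : omega [:: false] k = false.
Proof. by rewrite /omega modn1. Qed.

Lemma omega01 k : omega [:: false; true] k = odd k.
Proof. by rewrite /omega /= modn2; case: (odd k). Qed.

Lemma caseI (w : infword) : ~ contains_3antipower w ->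
  (exists N, forall k, N <= k -> w k = false) -> listed_word w.
Proof.
move=> A [N HN].
have ub : forall i, w i -> i <= N.
  by move=> i Wi; apply: contraTT Wi; rewrite -ltnNge => H; rewrite HN // ltnW.
case: (classic (exists k, w k)) => [ex1|no1]; last first.
  left => k; rewrite omega0; apply/negbTE/negP => W; apply: no1; by exists k.
case: (ex_maxnP ex1 ub) => b Wb Hb.
case: (classic (exists k, (k < b) && w k)) => [ex2|no2]; last first.
  do 4 right; exists b => k; rewrite prependi.
  case: (eqVneq k b) => [->|Hk] //; apply/negbTE/negP => W.
  have := Hb k W => Hkb; apply: no2; exists k; rewrite W andbT; lia.
have ub2 : forall i, (i < b) && w i -> i <= b by move=> i /andP [H _]; lia.
case: (ex_maxnP ex2 ub2) => a /andP [Hab Wa] Ha.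
have Z1 k : a < k < b -> w k = false.
  move=> H; apply/negbTE/negP => W; have := Ha k; rewrite W andbT; lia.
have Z2 k : b < k -> w k = false.
  move=> H; apply/negbTE/negP => W; have := Hb k W; lia.
case: (leqP 3 (b - a)) => Hd.
  case: A; apply: (@T1 w a (b - a)) => //.
  - by rewrite subnKC // ltnW.
  - by move=> k Hk; apply: Z1; lia.
  - by move=> k Hk; apply: Z2; lia.
case: (posnP a) => Ha0.
  subst a.
  have [Eb|Eb] : b = 1 \/ b = 2 by lia.
  - subst b; right; right; left => k; rewrite prepend110.
    by case: k => [|[|k]] /=; [exact: Wa | exact: Wb | apply: Z2; lia].
  - subst b; do 3 right; left => k; rewrite prepend1010.
    by case: k => [|[|[|k]]] /=; [exact: Wa | apply: Z1 | exact: Wb | apply: Z2]; lia.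
case: A.
have h1 : w (a - 1 + 1) = true by rewrite subnK //; lia.
have [Eb|Eb] : b = a + 1 \/ b = a + 2 by lia.
- apply: (@C3a w (a - 1)).
all: try (first [exact h1 | (rewrite (_ : a - 1 + 2 = b) //; lia) | (apply: Z2; lia)]).
- apply: (@C3b w (a - 1)).
all: try (first [exact h1 | (rewrite (_ : a - 1 + 3 = b) //; lia) | (apply: Z1; lia) | (apply: Z2; lia)]).
Qed.

Lemma blocks_eq (w : infword) q1 q2 m :
  (forall j, j < m -> w (q1 + j) = w (q2 + j)) -> factor w q1 m = factor w q2 m.
Proof.
move=> H; apply: (@eq_from_nth _ false); rewrite ?size_factor // => j Hj.
by rewrite !nth_factor // H.
Qed.

Lemma no_anti3 (w : infword) i m :
  (forall j, j < m -> w (i + j) = w (i + m + j)) \/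
  (forall j, j < m -> w (i + j) = w (i + m + m + j)) \/
  (forall j, j < m -> w (i + m + j) = w (i + m + m + j)) -> ~~ anti3 w i m.
Proof.
rewrite /anti3 => [[H|[H|H]]]; rewrite (blocks_eq H) eqxx /= ?andbF //.
Qed.

Lemma avoid_of (w : infword) : (forall i m, ~~ anti3 w i m) -> ~ contains_3antipower w.
Proof. by move=> H /containsP [i [m A]]; move: (H i m); rewrite A. Qed.

Lemma av0 : ~ contains_3antipower (fun _ => false).
Proof. by apply: avoid_of => i m; apply: no_anti3; left. Qed.

Lemma av01 : ~ contains_3antipower odd.
Proof.
apply: avoid_of => i m; apply: no_anti3; right; left => j _.
rewrite (_ : i + m + m + j = i + j + 2 * m); last lia.
by rewrite [odd (i + j + _)]oddD oddM /= addbF.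
Qed.

Lemma av_single i0 : ~ contains_3antipower (fun k => k == i0).
Proof.
apply: avoid_of => i m; apply: no_anti3.
case: (ltnP i0 (i + m)) => H1.
  by right; right => j Hj; do 2 (case: eqP => //; try lia).
case: (ltnP i0 (i + m + m)) => H2.
  by right; left => j Hj; do 2 (case: eqP => //; try lia).
by left => j Hj; do 2 (case: eqP => //; try lia).
Qed.

Lemma av_small (w : infword) : (forall k, 3 <= k -> w k = false) ->
  ~~ anti3 w 0 1 -> ~~ anti3 w 1 1 -> ~~ anti3 w 0 2 -> ~ contains_3antipower w.
Proof.
move=> Z a01 a11 a02; apply: avoid_of => i m.
case: (leqP 3 (i + m)) => H.
  apply: no_anti3; right; right => j Hj; rewrite !Z //; lia.
case: m H => [|m] H.
  by apply: no_anti3; left.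
have [E|[E|E]] : (i = 0 /\ m = 0) \/ (i = 1 /\ m = 0) \/ (i = 0 /\ m = 1) by lia.
all: by case: E => -> ->.
Qed.

Lemma av110 : ~ contains_3antipower (fun k => k < 2).
Proof. by apply: av_small => //; case=> [|[|[|k]]]. Qed.

Lemma av1010 : ~ contains_3antipower (fun k => (k == 0) || (k == 2)).
Proof. by apply: av_small => //; case=> [|[|[|k]]]. Qed.

Lemma listed_avoid (w : infword) : listed_word w -> ~ contains_3antipower w.
Proof.
move=> [H|[H|[H|[H|[i H]]]]] C.
- by apply: av0; apply: contains_ext C => k; rewrite H omega0.
- by apply: av01; apply: contains_ext C => k; rewrite H omega01.
- by apply: av110; apply: contains_ext C => k; rewrite H prepend110.
- by apply: av1010; apply: contains_ext C => k; rewrite H prepend1010.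
- by apply: (@av_single i); apply: contains_ext C => k; rewrite H prependi.
Qed.

Theorem corollary6 (w : infword) :
  ~ contains_3antipower w <->
  (listed_word w \/ exists v : infword, listed_word v /\ w =1 compl v).
Proof.
split.
- move=> A.
  case: (classic (exists N, forall k, N <= k -> w k = false)) => [H0|H0].
    by left; apply: caseI.
  case: (classic (exists N, forall k, N <= k -> compl w k = false)) => [H1|H1].
    right; exists (compl w); split.
      by apply: caseI => // /contains_compl.
    by move=> k; rewrite /compl negbK.
  have Halt := caseII A H0 H1.
  have S := alt_seq (Q := 0) (fun p _ => Halt p).
  case W0: (w 0).
    right; exists (omega [:: false; true]); split; first by right; left.
    by move=> k; rewrite /compl omega01 -(add0n k) S W0 add0n; case: (odd k).
  left; right; left => k.
  by rewrite omega01 -(add0n k) S W0 add0n; case: (odd k).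
- move=> [L|[v [L E]]] C; first exact: listed_avoid L C.
  apply: (listed_avoid L); apply: contains_compl.
  by apply: contains_ext C.
Qed.
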